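(* Assume regular conditional distributions $P_{Y|X}$ and $P_{X|Y}$ exist. Let $h>0$ be a density w.r.t. $P_X$ of some probability measure $Q^\ast_X$ on $(\Omega_X,\mathcal H)$, and let $g_0>0$ be a density w.r.t. $P_Y$ of a probability measure on $(\Omega_Y,\mathcal G)$. Define recursively for $n=0,1,\dots$ $$q^{(n)}_{Y|X=x}(y)=\frac{g_n(y)}{\int g_n(z)\,P_{Y|X=x}(dz)},\qquad g_{n+1}(y)=\int q^{(n)}_{Y|X=x}(y)\,h(x)\,P_{X|Y=y}(dx),$$ for $x\in\Omega_X$, $y\in\Omega_Y$. Then: (i) all $q^{(n)}_{Y|X=x}$ ($x\in\Omega_X$, $n\ge0$) are positive and probability densities with respect to $P_{Y|X=x}$, and all $g_n$ ($n\ge1$) are positive and probability densities with respect to $P_Y$. (ii) Let $Q^{(n)}$ be the probability measure on $(\Omega,\mathcal F)$ with $\frac{dQ^{(n)}}{dP}=g_n(Y)$ and $h_n=\frac{dQ^{(n)}_X}{dP_X}=E_P[g_n(Y)\mid X=\cdot]$. Assume that all integrals involved exist and are finite, in particular $E_P[h(X)\,|\log h(X)|]<\infty$ and $E_P[h(X)\,|\log h_n(X)|]<\infty$ for all $n$. Then $$\mathrm{KL}_{P_X}(h\,\|\,h_{n+1})\le\mathrm{KL}_{P_X}(h\,\|\,h_n)\quad\text{for all } n=0,1,\dots$$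
   Context: Setting: $(\Omega_X,\mathcal H)$ and $(\Omega_Y,\mathcal G)$ are measurable spaces, $\Omega=\Omega_X\times\Omega_Y$, $\mathcal F=\mathcal H\otimes\mathcal G$, and $X,Y$ are the coordinate projections. $P$ is a probability measure on $(\Omega,\mathcal F)$ with marginals $P_X,P_Y$. A regular conditional distribution of $Y$ given $X$ under $P$ is a map $(x,G)\mapsto P_{Y|X=x}[G]$ on $\Omega_X\times\mathcal G$ that is $\mathcal H$-measurable in $x$ for each $G$, a probability measure in $G$ for each $x$, and satisfies $P[Y\in G\mid X=x]=P_{Y|X=x}[G]$ for $P_X$-a.e. $x$, for every $G\in\mathcal G$; $P_{X|Y}$ is defined analogously. Kullback–Leibler divergence: for a probability space $(\overline\Omega,\mathcal M,\mu)$ and measurable $\lambda_0,\lambda_1\ge0$ with $\int\lambda_i\,d\mu=1$, $\mu[\lambda_i=0]=0$ ($i=0,1$) and $\int\lambda_0|\log(\lambda_0/\lambda_1)|\,d\mu<\infty$, $\mathrm{KL}_\mu(\lambda_0\|\lambda_1)=\int\lambda_0\log(\lambda_0/\lambda_1)\,d\mu$.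
   Formalization: The integrals $\int g_n(z)\,P_{Y|X=x}(dz)$ and $\int q^{(n)}_{Y|X=x}(y)\,h(x)\,P_{X|Y=y}(dx)$ are assumed finite for every n, x and y, a hypothesis that also governs part (i). The paper assumes this as well. *)

(* Defs.v *)
From HB Require Import structures.
From mathcomp Require Import all_boot all_order all_algebra.
From mathcomp Require Import all_classical all_reals all_analysis.
Set Implicit Arguments. Unset Strict Implicit. Unset Printing Implicit Defensive.
Import Order.TTheory GRing.Theory Num.Theory.
Local Open Scope classical_set_scope.
Local Open Scope ring_scope.

Section marginals.
Context d1 d2 (TX : measurableType d1) (TY : measurableType d2) (R : realType).

Definition projX : (TX * TY)%type -> TX := fst.
Definition projY : (TX * TY)%type -> TY := snd.
HB.instance Definition _ := isMeasurableFun.Build _ _ _ _ projX measurable_fst.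
HB.instance Definition _ := isMeasurableFun.Build _ _ _ _ projY measurable_snd.

Definition margX (P : probability (TX * TY)%type R) := distribution P projX.
Definition margY (P : probability (TX * TY)%type R) := distribution P projY.

(** k is a regular conditional distribution of Y given X under P:
    k is a probability kernel (measurable in x, probability in G) and
    x |-> k x G is a version of P[Y in G | X = x], i.e. (definition of
    conditional probability) for all measurable H, G,
    P[X in H, Y in G] = \int_H k x G dP_X(x). *)
Definition is_rcd_YgivenX (P : probability (TX * TY)%type R)
    (k : R.-pker TX ~> TY) :=
  forall (H : set TX) (G : set TY), measurable H -> measurable G ->
    P (H `*` G) = (\int[margX P]_(x in H) k x G)%E.

Definition is_rcd_XgivenY (P : probability (TX * TY)%type R)
    (k : R.-pker TY ~> TX) :=
  forall (H : set TX) (G : set TY), measurable H -> measurable G ->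
    P (H `*` G) = (\int[margY P]_(y in G) k y H)%E.

(** The recursion:
    q^(n)_{Y|X=x}(y) = g_n(y) / \int g_n(z) P_{Y|X=x}(dz)
    g_{n+1}(y) = \int q^(n)_{Y|X=x}(y) h(x) P_{X|Y=y}(dx)
    (integrals taken in \bar R, then converted to reals with [fine];
     their finiteness is a hypothesis of the theorem). *)
Section recursion.
Variables (kYX : R.-pker TX ~> TY) (kXY : R.-pker TY ~> TX)
  (h : TX -> R) (g0 : TY -> R).

Definition qstep (g : TY -> R) (x : TX) (y : TY) : R :=
  g y / fine (\int[kYX x]_z (g z)%:E)%E.

Definition gstep (g : TY -> R) (y : TY) : R :=
  fine (\int[kXY y]_x (qstep g x y * h x)%:E)%E.

Fixpoint gseq (n : nat) : TY -> R :=
  match n with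
  | 0%N => g0
  | n'.+1 => gstep (gseq n')
  end.

Definition qseq (n : nat) : TX -> TY -> R := qstep (gseq n).

End recursion.
End marginals.

Definition KL d (T : measurableType d) (R : realType)
    (mu : {measure set T -> \bar R}) (l0 l1 : T -> R) : \bar R :=
  (\int[mu]_x (l0 x * ln (l0 x / l1 x))%:E)%E.

(* Main.v *)
Require Import Defs.
From HB Require Import structures.
From mathcomp Require Import all_boot all_order all_algebra.
From mathcomp Require Import all_classical all_reals all_analysis.
From mathcomp Require Import measurable_realfun.
From mathcomp Require Import ring lra.
Import Order.TTheory GRing.Theory Num.Theory.
Local Open Scope classical_set_scope.
Local Open Scope ring_scope.
Section disint.
Context d1 d2 (TX : measurableType d1) (TY : measurableType d2) (R : realType).
Local Open Scope ereal_scope.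

Definition kpair (k : R.-pker TX ~> TY) (x : TX) : {measure set (TX*TY) -> \bar R}.
refine (pushforward (k x) (pair x)). exact: pair1_measurable. Defined.

Lemma kpairE (k : R.-pker TX ~> TY) x A : kpair k x A = k x (xsection A x).
Proof.
rewrite /kpair /pushforward; congr (k x _); apply/seteqP; split => y /=;
 rewrite /xsection /= inE //.
Qed.

Variables (mu : probability TX R) (k : R.-pker TX ~> TY).

Definition lc : unit -> {measure set TX -> \bar R} := fun _ => mu.
Let lc_meas U : measurable U -> measurable_fun [set: unit] (lc ^~ U).
Proof. by move=> mU; rewrite /lc; exact: measurable_cst. Qed.
HB.instance Definition _ := isKernel.Build _ _ _ _ _ lc lc_meas.
Let lc_prob x : lc x [set: TX] = 1.
Proof. exact: probability_setT. Qed.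
HB.instance Definition _ := Kernel_isProbability.Build _ _ _ _ _ lc lc_prob.

Definition kc : (unit * TX)%type -> {measure set (TX*TY) -> \bar R} :=
  fun p => kpair k p.2.
Let kc_meas U : measurable U -> measurable_fun [set: unit * TX] (kc ^~ U).
Proof.
move=> mU; rewrite /kc.
rewrite (_ : (fun p => _) = (fun x => k x (xsection U x)) \o snd); last first.
  by apply/funext => p; rewrite /= kpairE.
apply: measurableT_comp => //.
by apply: (measurable_fun_xsection_finite_kernel (k : R.-fker _ ~> _)); rewrite inE.
Qed.
HB.instance Definition _ := isKernel.Build _ _ _ _ _ kc kc_meas.
Let kc_prob x : kc x [set: TX * TY] = 1.
Proof. by rewrite /kc kpairE /xsection /= (_ : [set y | _] = setT) ?prob_kernel //;
  apply/seteqP; split => y //= _; rewrite inE. Qed.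
HB.instance Definition _ := Kernel_isProbability.Build _ _ _ _ _ kc kc_prob.

Lemma disint (P : {measure set (TX*TY) -> \bar R}) :
  (forall H G, measurable H -> measurable G ->
     P (H `*` G) = \int[mu]_(x in H) k x G) ->
  forall f : TX * TY -> \bar R, measurable_fun [set: TX * TY] f ->
  (forall w, 0%E <= f w) ->
  \int[P]_w f w = \int[mu]_x \int[k x]_y f (x, y).
Proof.
move=> hP f mf f0.
have PE : forall A, measurable A -> P A = kcomp lc kc tt A.
  apply: (measure_unique _ (fun _ => setT)).
  - exact: measurable_prod_measurableType.
  - move=> _ _ [X1 mX1 [X2 mX2 <-]] [Y1 mY1 [Y2 mY2 <-]].
    exists (X1 `&` Y1); first exact: measurableI.
    by exists (X2 `&` Y2); [exact: measurableI|rewrite setXI].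
  - by move=> _; exists setT => //; exists setT => //; rewrite setXTT.
  - by rewrite bigcup_const.
  - move=> _ [H mH [G mG <-]]; rewrite hP // /kcomp /lc /kc /= integral_mkcond.
    apply: eq_integral => x _; rewrite kpairE /patch.
    case: ifPn => xH.
      by rewrite in_xsectionX.
    by rewrite notin_xsectionX // measure0.
  - move=> _; rewrite -setXTT hP //.
    rewrite (eq_integral (fun=> 1)); last by move=> x _; rewrite prob_kernel.
    by rewrite integral_cst // mul1e (le_lt_trans (probability_le1 _ _)) ?ltey.
rewrite (eq_measure_integral (kcomp lc kc tt : {measure set _ -> \bar R})); last first.
  by move=> A mA _; exact: PE.
rewrite integral_kcomp //; apply: eq_integral => x _.
by rewrite /kc /= /kpair ge0_integral_pushforward.
Qed.
End disint.
Section helpers.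
Local Open Scope ereal_scope.

Lemma mfunV d (T : measurableType d) (R : realType) (f : T -> R) :
  measurable_fun [set: T] f -> (forall x, (0 <= f x)%R) ->
  measurable_fun [set: T] (fun x => (f x)^-1%R).
Proof.
move=> mf f0.
rewrite (_ : (fun x => _) = (fun x =>
   (\1_(~` [set 0%R]) (f x) * expR (- ln (f x)))%R)); last first.
  apply/funext => x; rewrite indicE.
  have [->|fx0] := eqVneq (f x) 0%R.
    by rewrite invr0 memNset ?mul0r //= => /(_ erefl).
  rewrite mem_set /=; last by apply/eqP.
  by rewrite mul1r expRN lnK // posrE lt0r fx0 f0.
apply: measurable_funM.
  apply: measurableT_comp => //; apply: measurable_indic.
  by apply: measurableC; exact: measurable_set1.
apply: measurableT_comp; first exact: measurable_expR.
apply: measurableT_comp; first exact: oppr_measurable.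
by apply: measurableT_comp => //; exact: measurable_ln.
Qed.

Lemma pos_int d (T : measurableType d) (R : realType)
  (mu : {measure set T -> \bar R}) (f : T -> R) :
  mu [set: T] = 1 -> measurable_fun [set: T] f -> (forall x, (0 < f x)%R) ->
  0 < \int[mu]_x (f x)%:E.
Proof.
move=> mu1 mf f0; rewrite lt0e integral_ge0 ?andbT; last first.
  by move=> x _; rewrite lee_fin ltW.
apply/negP => /eqP I0.
have : \int[mu]_(x in [set: T]) `|(f x)%:E| = 0.
  by rewrite -I0; apply: eq_integral => x _; rewrite gee0_abs // lee_fin ltW.
have mEf : measurable_fun [set: T] (fun x => (f x)%:E) by exact/measurable_EFinP.
move/(ae_eq_integral_abs mu measurableT mEf).
case=> N [mN N0 sN].
have : [set: T] `<=` N.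
  move=> x _; apply: sN => /= /(_ I) [] /eqP.
  by rewrite gt_eqF.
move/(le_measure mu); rewrite !inE => /(_ measurableT mN).
move=> H; move: mu1 => /eqP; rewrite eq_le => /andP[_ H1].
move: N0 => /eqP; rewrite eq_le => /andP[N0' _].
have := le_trans (le_trans H1 H) N0'.
by apply/negP; rewrite -ltNge; exact: lte01.
Qed.

End helpers.
Section helpers2.

Lemma intI d (T : measurableType d) (R : realType) (mu : {measure set T -> \bar R})
  (D : set T) (f : T -> R) :
  (\int[mu]_(x in D) (f x)%:E = \int[mu]_x (\1_D x * f x)%:E)%E.
Proof.
rewrite integral_mkcond; apply: eq_integral => x _; rewrite patchE indicE.
by case: (x \in D); rewrite ?mul1r ?mul0r.
Qed.

Lemma ae_map d (T : measurableType d) (R : realType) (mu : {measure set T -> \bar R})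
  (u v : T -> R) (F : T -> R -> R) :
  ae_eq mu [set: T] (fun x => (u x)%:E) (fun x => (v x)%:E) ->
  ae_eq mu [set: T] (fun x => (F x (u x))%:E) (fun x => (F x (v x))%:E).
Proof.
move=> H; apply: filterS H => x Hx Tx.
by case: (Hx Tx) => ->.
Qed.

Lemma lnge (R : realType) (t : R) : 0 < t -> 1 - t^-1 <= ln t.
Proof.
move=> t0.
have := @le_ln1Dx R (t^-1 - 1).
rewrite addrCA subrr addr0 lnV ?posrE //.
have : 0 < t^-1 by rewrite invr_gt0.
move=> ti H; have := H ltac:(lra).
lra.
Qed.

Lemma keyineq (R : realType) (m r : R) : 0 < m -> 0 < r ->
  2 - r / m - r^-1 <= ln m.
Proof.
move=> m0 r0.
have h1 := @lnge R (m / r) (divr_gt0 m0 r0); rewrite invf_div in h1.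
have h2 := @lnge R r r0.
have : ln m = ln (m / r) + ln r.
  by rewrite -lnM ?posrE ?divr_gt0 // divfK // gt_eqF.
lra.
Qed.

Lemma maxsub (R : realType) (a : R) : Num.max a 0 - Num.max (- a) 0 = a.
Proof.
have [a0|a0] := leP a 0.
  rewrite max_l ?oppr_ge0 //; lra.
rewrite max_r; first lra.
by rewrite oppr_le0 ltW.
Qed.

Lemma max_le_norm (R : realType) (a : R) : Num.max a 0 <= `|a|.
Proof. by rewrite ge_max normr_ge0 ler_norm. Qed.

End helpers2.

Lemma int_abs_ge0 d (T : measurableType d) (R : realType)
  (mu : {measure set T -> \bar R}) (D : set T) (f : T -> R) :
  (forall x, (0 <= f x)%R) ->
  (\int[mu]_(x in D) `|(f x)%:E| = \int[mu]_(x in D) (f x)%:E)%E.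
Proof. by move=> f0; apply: eq_integral => x _; rewrite gee0_abs // lee_fin. Qed.

Lemma lndiv (R : realType) (a b : R) : 0 < a -> 0 < b -> ln (a / b) = ln a - ln b.
Proof. by move=> a0 b0; rewrite lnM ?posrE ?invr_gt0 // lnV ?posrE. Qed.
Section main.
Context (R : realType) (d1 d2 : measure_display)
  (TX : measurableType d1) (TY : measurableType d2)
  (P : probability (TX * TY)%type R)
  (kYX : R.-pker TX ~> TY) (kXY : R.-pker TY ~> TX)
  (h : TX -> R) (g0 : TY -> R).
Hypotheses (rYX : is_rcd_YgivenX P kYX) (rXY : is_rcd_XgivenY P kXY).
Local Open Scope ereal_scope.

Local Notation PX := (margX P).
Local Notation PY := (margY P).

Lemma DX (f : TX * TY -> \bar R) : measurable_fun [set: TX * TY] f ->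
  (forall w, 0 <= f w) ->
  \int[P]_w f w = \int[PX]_x \int[kYX x]_y f (x, y).
Proof. by move=> mf f0; apply: disint => //; exact: rYX. Qed.

Definition Psw : {measure set (TY * TX) -> \bar R}.
refine (pushforward P (@unstable.swap TX TY)). exact: measurable_swap. Defined.

Lemma DY (f : TX * TY -> \bar R) : measurable_fun [set: TX * TY] f ->
  (forall w, 0 <= f w) ->
  \int[P]_w f w = \int[PY]_y \int[kXY y]_x f (x, y).
Proof.
move=> mf f0.
have -> : \int[P]_w f w = \int[Psw]_w (f \o unstable.swap) w.
  rewrite /Psw /= ge0_integral_pushforward //; try exact: measurable_swap;
    try (by apply: measurableT_comp => //; exact: measurable_swap).
  set S := (_ @^-1` _).
  have -> : S = [set: TX * TY] by apply/seteqP; split.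
  by apply: eq_integral => -[x y].
rewrite (@disint _ _ TY TX R PY kXY Psw _ (f \o unstable.swap)) //.
- move=> G H mG mH; rewrite /Psw /= /pushforward.
  rewrite (_ : unstable.swap @^-1` _ = H `*` G); first exact: rXY.
  by apply/seteqP; split => -[x y] /= [a b].
- by apply: measurableT_comp => //; exact: measurable_swap.
- by move=> w; exact: f0.
Qed.

Hypotheses (mh : measurable_fun [set: TX] h) (h0 : forall x, (0 < h x)%R)
  (ih : \int[PX]_x (h x)%:E = 1)
  (mg0 : measurable_fun [set: TY] g0) (g00 : forall y, (0 < g0 y)%R)
  (ig0 : \int[PY]_y (g0 y)%:E = 1)
  (finC : forall n x, \int[kYX x]_z (gseq kYX kXY h g0 n z)%:E < +oo)
  (finG : forall n y,
     \int[kXY y]_x (qseq kYX kXY h g0 n x y * h x)%:E < +oo).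

Local Notation g := (gseq kYX kXY h g0).
Local Notation q := (qseq kYX kXY h g0).

Definition CC n x := \int[kYX x]_z (g n z)%:E.
Definition cc n x := fine (CC n x).

Lemma qE n x y : q n x y = (g n y / cc n x)%R.
Proof. by []. Qed.

Lemma gSE n y : g n.+1 y = fine (\int[kXY y]_x (q n x y * h x)%:E).
Proof. by []. Qed.

Section step.
Variable n : nat.
Hypotheses (mg : measurable_fun [set: TY] (g n)) (gp : forall y, (0 < g n y)%R).

Lemma CCmeas : measurable_fun [set: TX] (CC n).
Proof.
apply: measurable_fun_integral_kernel.
- exact: measurable_kernel.
- by move=> z; rewrite lee_fin ltW.
- exact/measurable_EFinP.
Qed.

Lemma CCfin x : CC n x = (cc n x)%:E.
Proof.
rewrite /cc fineK // ge0_fin_numE ?finC //.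
by apply: integral_ge0 => z _; rewrite lee_fin ltW.
Qed.

Lemma ccpos x : (0 < cc n x)%R.
Proof.
apply: fine_gt0; rewrite finC andbT.
by apply: pos_int => //; exact: prob_kernel.
Qed.

Lemma ccmeas : measurable_fun [set: TX] (cc n).
Proof.
apply: measurableT_comp; last exact: CCmeas.
exact: fine_measurable.
Qed.

Lemma qmeas x : measurable_fun [set: TY] (q n x).
Proof.
by apply: measurable_funM => //.
Qed.

Lemma qpos x y : (0 < q n x y)%R.
Proof. by rewrite qE divr_gt0 // ccpos. Qed.

Lemma qint x : \int[kYX x]_y (q n x y)%:E = 1.
Proof.
under eq_integral do rewrite qE EFinM muleC.
rewrite ge0_integralZl //; last 3 first.
- exact/measurable_EFinP.
- by move=> y _; rewrite lee_fin ltW.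
- by rewrite lee_fin invr_ge0 ltW // ccpos.
by rewrite -/(CC n x) CCfin -EFinM mulVf // gt_eqF // ccpos.
Qed.

Lemma Fmeas : measurable_fun [set: TY * TX]
  (fun w : TY * TX => (q n w.2 w.1 * h w.2)%:E).
Proof.
apply/measurable_EFinP.
apply: measurable_funM; last exact: measurableT_comp.
apply: measurable_funM; first exact: measurableT_comp.
have mV := @mfunV _ _ _ _ ccmeas (fun x => ltW (ccpos x)).
exact: (measurableT_comp mV measurable_snd).
Qed.

Lemma gSmeas : measurable_fun [set: TY] (g n.+1).
Proof.
apply: measurableT_comp; first exact: fine_measurable.
apply: (measurable_fun_integral_sfinite_kernel
  (fun w : TY * TX => (q n w.2 w.1 * h w.2)%:E) kXY).
- by move=> w; rewrite lee_fin mulr_ge0 // ltW // qpos.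
- exact: Fmeas.
Qed.

Lemma gSpos y : (0 < g n.+1 y)%R.
Proof.
rewrite gSE; apply: fine_gt0; rewrite finG andbT.
apply: pos_int.
- exact: prob_kernel.
- apply: measurable_funM => //.
  apply: measurable_funM => //.
  exact: (@mfunV _ _ _ _ ccmeas (fun x => ltW (ccpos x))).
- by move=> x; rewrite mulr_gt0 // qpos.
Qed.

End step.

Lemma gprop n : measurable_fun [set: TY] (g n) /\ forall y, (0 < g n y)%R.
Proof.
elim: n => [|n [mg gp]]; first by split.
by split; [exact: gSmeas|exact: gSpos].
Qed.

Lemma gmeas n : measurable_fun [set: TY] (g n).
Proof. by case: (gprop n). Qed.
Lemma gpos n y : (0 < g n y)%R.
Proof. by case: (gprop n). Qed.
Lemma ccpos' n x : (0 < cc n x)%R.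
Proof. exact: ccpos (gmeas n) (gpos n) x. Qed.
Lemma ccmeas' n : measurable_fun [set: TX] (cc n).
Proof. exact: ccmeas (gmeas n) (gpos n). Qed.
Lemma CCfin' n x : CC n x = (cc n x)%:E.
Proof. exact: CCfin (gpos n) x. Qed.
Lemma qpos' n x y : (0 < q n x y)%R.
Proof. exact: qpos (gmeas n) (gpos n) x y. Qed.
Lemma qint' n x : \int[kYX x]_y (q n x y)%:E = 1.
Proof. exact: qint (gmeas n) (gpos n) x. Qed.

Lemma ccinvmeas n : measurable_fun [set: TX] (fun x => (cc n x)^-1%R).
Proof. exact: (@mfunV _ _ _ _ (ccmeas' n) (fun x => ltW (ccpos' n x))). Qed.

Lemma Gfin n y : \int[kXY y]_x (q n x y * h x)%:E = (g n.+1 y)%:E.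
Proof.
rewrite gSE fineK // ge0_fin_numE ?finG //.
by apply: integral_ge0 => x _; rewrite lee_fin mulr_ge0 // ltW // qpos'.
Qed.

Lemma Fmeas2 n : measurable_fun [set: TX * TY]
  (fun w : TX * TY => (q n w.1 w.2 * h w.1)%:E).
Proof.
apply/measurable_EFinP.
apply: measurable_funM; last exact: measurableT_comp.
apply: measurable_funM; first by apply: measurableT_comp => //; exact: gmeas.
exact: (measurableT_comp (ccinvmeas n) measurable_fst).
Qed.

Lemma gint n : \int[PY]_y (g n y)%:E = 1.
Proof.
case: n => [//|n].
transitivity (\int[PY]_y \int[kXY y]_x (q n x y * h x)%:E).
  by apply: eq_integral => y _; rewrite Gfin.
rewrite -(@DY (fun w => (q n w.1 w.2 * h w.1)%:E)); last 2 first.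
- exact: Fmeas2.
- by move=> w; rewrite lee_fin mulr_ge0 // ltW // ?qpos'.
rewrite DX; last 2 first.
- exact: Fmeas2.
- by move=> w; rewrite lee_fin mulr_ge0 // ltW // ?qpos'.
rewrite -ih; apply: eq_integral => x _ /=.
under eq_integral do rewrite EFinM muleC.
rewrite ge0_integralZl //; last 3 first.
- apply/measurable_EFinP; exact: qmeas (gmeas n) x.
- by move=> y _; rewrite lee_fin ltW // qpos'.
- by rewrite lee_fin ltW.
by rewrite qint' mule1.
Qed.

Lemma intC n (A : set TX) : measurable A ->
  \int[PX]_(x in A) (cc n x)%:E = \int[P]_(w in A `*` [set: TY]) (g n w.2)%:E.
Proof.
move=> mA; rewrite intI [RHS]intI DX; last 2 first.
- apply/measurable_EFinP; apply: measurable_funM.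
    by apply: measurable_indic; exact: measurableX.
  by apply: measurableT_comp => //; exact: gmeas.
- by move=> w; rewrite lee_fin mulr_ge0 // ltW // gpos.
apply: eq_integral => x _.
transitivity (\int[kYX x]_y ((\1_A x)%:E * (g n y)%:E)); last first.
  apply: eq_integral => y _; rewrite -EFinM !indicE in_setX /= in_setT andbT //.
rewrite ge0_integralZl //; last 2 first.
- exact/measurable_EFinP/gmeas.
- by move=> y _; rewrite lee_fin ltW // gpos.
by rewrite -/(CC n x) CCfin' -EFinM.
Qed.

Lemma intPg n : \int[P]_w (g n w.2)%:E = 1.
Proof.
rewrite DY; last 2 first.
- by apply/measurable_EFinP; apply: measurableT_comp => //; exact: gmeas.
- by move=> w; rewrite lee_fin ltW // gpos.
rewrite -(gint n); apply: eq_integral => y _.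
by rewrite (eq_integral (cst (g n y)%:E)) // integral_cst // prob_kernel mule1.
Qed.

Lemma ccint n : PX.-integrable [set: TX] (fun x => (cc n x)%:E).
Proof.
apply/integrableP; split; first exact/measurable_EFinP/ccmeas'.
under eq_integral do rewrite gee0_abs ?lee_fin ?ltW ?ccpos' //.
rewrite (@intC n setT measurableT) setXTT.
by rewrite (_ : \int[P]_(w in [set: TX * TY]) (g n w.2)%:E = 1) ?ltey // intPg.
Qed.

Section partii.
Variable hn : nat -> TX -> R.
Hypotheses (mhn : forall n, measurable_fun [set: TX] (hn n))
  (hn0 : forall n x, (0 <= hn n x)%R)
  (hnE : forall n (A : set TX), measurable A ->
        \int[PX]_(x in A) (hn n x)%:E
         = \int[P]_(w in A `*` [set: TY]) (g n w.2)%:E)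
  (fhl : \int[PX]_x (h x * `|ln (h x)|)%:E < +oo)
  (fhn : forall n, \int[PX]_x (h x * `|ln (hn n x)|)%:E < +oo).

Lemma hn_ae n : ae_eq PX [set: TX] (fun x => (cc n x)%:E) (fun x => (hn n x)%:E).
Proof.
apply: integral_ae_eq => //; first exact: ccint.
- exact/measurable_EFinP.
- by move=> E _ mE; rewrite intC // hnE.
Qed.

Lemma hninvmeas n : measurable_fun [set: TX] (fun x => (hn n x)^-1%R).
Proof. exact: (@mfunV _ _ _ _ (mhn n) (hn0 n)). Qed.

Lemma KLE n : KL PX h (hn n) = \int[PX]_x (h x * ln (h x / cc n x))%:E.
Proof.
rewrite /KL; apply: ae_eq_integral => //.
- apply/measurable_EFinP; apply: measurable_funM => //.
  apply: measurableT_comp; first exact: measurable_ln.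
  by apply: measurable_funM => //; exact: hninvmeas.
- apply/measurable_EFinP; apply: measurable_funM => //.
  apply: measurableT_comp; first exact: measurable_ln.
  by apply: measurable_funM => //; exact: ccinvmeas.
- apply: (@ae_map _ _ _ _ _ _ (fun x t => h x * ln (h x / t))%R).
  exact: ae_eq_sym (hn_ae n).
Qed.

Lemma mlnabs (u : TX -> R) : measurable_fun [set: TX] u ->
  measurable_fun [set: TX] (fun x => (h x * `|ln (u x)|)%:E).
Proof.
move=> mu; apply/measurable_EFinP; apply: measurable_funM => //.
apply: measurableT_comp; first exact: normr_measurable.
by apply: measurableT_comp; [exact: measurable_ln|].
Qed.

Lemma hlnh_int : PX.-integrable [set: TX] (fun x => (h x * `|ln (h x)|)%:E).
Proof.
apply/integrableP; split; first exact: mlnabs.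
by rewrite int_abs_ge0 // => x; rewrite mulr_ge0 // ltW.
Qed.

Lemma hlnc_int k : PX.-integrable [set: TX] (fun x => (h x * `|ln (cc k x)|)%:E).
Proof.
apply/integrableP; split; first exact/mlnabs/ccmeas'.
rewrite int_abs_ge0; last by move=> x; rewrite mulr_ge0 // ltW.
rewrite -(@ae_eq_integral _ _ _ PX _ (fun x => (h x * `|ln (cc k x)|)%:E)
  (fun x => (h x * `|ln (hn k x)|)%:E) measurableT); first exact: fhn.
- exact: mlnabs.
- exact/mlnabs/ccmeas'.
- apply: (@ae_map _ _ _ _ _ _ (fun x t => h x * `|ln t|)%R).
  exact: ae_eq_sym (hn_ae k).
Qed.

Section key.
Variable n : nat.
Let c := cc n.
Let c' := cc n.+1.
Let mm x := (c' x / c x)%R.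
Let rho y := (g n.+1 y / g n y)%R.
Let lp x := (Num.max (ln (mm x)) 0)%R.
Let lm x := (Num.max (- ln (mm x)) 0)%R.

Let mm_pos x : (0 < mm x)%R.
Proof. by rewrite divr_gt0 // ccpos'. Qed.
Let rho_pos y : (0 < rho y)%R.
Proof. by rewrite divr_gt0 // gpos. Qed.

Let mm_meas : measurable_fun [set: TX] mm.
Proof. by apply: measurable_funM; [exact: ccmeas'|exact: ccinvmeas]. Qed.
Let lnmm_meas : measurable_fun [set: TX] (fun x => ln (mm x)).
Proof. by apply: measurableT_comp; [exact: measurable_ln|exact: mm_meas]. Qed.
Let lp_meas : measurable_fun [set: TX] lp.
Proof. by apply: measurable_maxr => //; exact: lnmm_meas. Qed.
Let lm_meas : measurable_fun [set: TX] lm.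
Proof.
apply: measurable_maxr => //; apply: measurable_funN; exact: lnmm_meas.
Qed.
Let rho_meas : measurable_fun [set: TY] rho.
Proof.
apply: measurable_funM; first exact: gmeas.
exact: (@mfunV _ _ _ _ (gmeas n) (fun y => ltW (gpos n y))).
Qed.
Let qm2 : measurable_fun [set: TX * TY] (fun w : TX * TY => q n w.1 w.2).
Proof.
apply: measurable_funM; first by apply: measurableT_comp => //; exact: gmeas.
exact: (measurableT_comp (ccinvmeas n) measurable_fst).
Qed.
Let Fm (phi : TX * TY -> R) : measurable_fun [set: TX * TY] phi ->
  measurable_fun [set: TX * TY] (fun w => (h w.1 * q n w.1 w.2 * phi w)%:E).
Proof.
move=> mphi; apply/measurable_EFinP; apply: measurable_funM => //.
apply: measurable_funM => //; exact: measurableT_comp.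
Qed.
Let F0 (phi : TX * TY -> R) : (forall w, 0 <= phi w)%R ->
  forall w, 0 <= (h w.1 * q n w.1 w.2 * phi w)%:E.
Proof.
move=> p0 w; rewrite lee_fin; apply: mulr_ge0 => //.
by apply: mulr_ge0; apply: ltW; [exact: h0|exact: qpos'].
Qed.

Lemma intF (phi : TX -> R) : measurable_fun [set: TX] phi ->
  (forall x, 0 <= phi x)%R ->
  \int[P]_w (h w.1 * q n w.1 w.2 * phi w.1)%:E = \int[PX]_x (h x * phi x)%:E.
Proof.
move=> mphi p0.
rewrite DX; last 2 first.
- by apply: Fm; exact: measurableT_comp.
- by apply: F0 => w; exact: p0.
apply: eq_integral => x _ /=.
transitivity (\int[kYX x]_y ((h x * phi x)%:E * (q n x y)%:E)).
  by apply: eq_integral => y _; rewrite -EFinM mulrAC.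
rewrite ge0_integralZl //; last 3 first.
- by apply/measurable_EFinP; exact: qmeas (gmeas n) x.
- by move=> y _; rewrite lee_fin ltW // qpos'.
- by rewrite lee_fin mulr_ge0 // ltW.
by rewrite qint' mule1.
Qed.

Lemma intT2 : \int[P]_w (h w.1 * q n w.1 w.2 * (rho w.2 / mm w.1))%:E = 1.
Proof.
rewrite DX; last 2 first.
- apply: Fm; apply: measurable_funM.
    exact: (measurableT_comp rho_meas measurable_snd).
  exact: (measurableT_comp (@mfunV _ _ _ _ mm_meas (fun x => ltW (mm_pos x)))
           measurable_fst).
- by apply: F0 => w; rewrite divr_ge0 // ltW.
rewrite -ih; apply: eq_integral => x _ /=.
transitivity (\int[kYX x]_y ((h x / c' x)%:E * (g n.+1 y)%:E)).
  apply: eq_integral => y _; rewrite -EFinM qE /rho /mm /c /c'.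
  have := gpos n y; have := gpos n.+1 y; have := ccpos' n x; have := ccpos' n.+1 x.
  move=> a b e f; congr EFin; field.
  by rewrite !gt_eqF.
rewrite ge0_integralZl //; last 3 first.
- exact/measurable_EFinP/gmeas.
- by move=> y _; rewrite lee_fin ltW // gpos.
- by rewrite lee_fin divr_ge0 // ltW // ccpos'.
rewrite -/(CC n.+1 x) CCfin' -EFinM /c' divfK //.
by rewrite gt_eqF // ccpos'.
Qed.

Lemma intT3 : \int[P]_w (h w.1 * q n w.1 w.2 * (rho w.2)^-1)%:E = 1.
Proof.
rewrite DY; last 2 first.
- apply: Fm.
  exact: (measurableT_comp (@mfunV _ _ _ _ rho_meas (fun y => ltW (rho_pos y)))
           measurable_snd).
- by apply: F0 => w; rewrite invr_ge0 // ltW.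
rewrite -(gint n); apply: eq_integral => y _ /=.
transitivity (\int[kXY y]_x ((g n y / g n.+1 y)%:E * (q n x y * h x)%:E)).
  apply: eq_integral => x _; rewrite -EFinM /rho.
  have := gpos n y; have := gpos n.+1 y.
  move=> a b; congr EFin; field.
  by rewrite !gt_eqF.
rewrite ge0_integralZl //; last 3 first.
- apply/measurable_EFinP; apply: measurable_funM => //.
  by apply: measurable_funM => //; exact: ccinvmeas.
- by move=> x _; rewrite lee_fin mulr_ge0 // ltW // ?qpos'.
- by rewrite lee_fin divr_ge0 // ltW // gpos.
rewrite Gfin -EFinM divfK //.
by rewrite gt_eqF // gpos.
Qed.

Lemma keyint : \int[PX]_x (h x * lm x)%:E <= \int[PX]_x (h x * lp x)%:E.
Proof.
pose F w := (h w.1 * q n w.1 w.2)%R.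
have ineq w : (F w * 2)%:E + (F w * lm w.1)%:E <=
   (F w * lp w.1)%:E + (F w * (rho w.2 / mm w.1))%:E + (F w * (rho w.2)^-1)%:E.
  rewrite -!EFinD lee_fin -!mulrDr; apply: ler_wpM2l.
    by rewrite /F mulr_ge0 // ltW // qpos'.
  have := @keyineq R _ _ (mm_pos w.1) (rho_pos w.2).
  have := @maxsub R (ln (mm w.1)).
  rewrite /lp /lm; lra.
have Fge0 w : (0 <= F w)%R by rewrite /F mulr_ge0 // ltW // qpos'.
have mF : measurable_fun [set: TX * TY] F.
  by apply: measurable_funM => //; exact: measurableT_comp.
have m1 : measurable_fun [set: TX * TY] (fun w : TX * TY => lp w.1).
  exact: measurableT_comp.
have m2 : measurable_fun [set: TX * TY] (fun w : TX * TY => rho w.2 / mm w.1)%R.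
  apply: measurable_funM; first exact: (measurableT_comp rho_meas measurable_snd).
  exact: (measurableT_comp (@mfunV _ _ _ _ mm_meas (fun x => ltW (mm_pos x)))
           measurable_fst).
have m3 : measurable_fun [set: TX * TY] (fun w : TX * TY => (rho w.2)^-1)%R.
  exact: (measurableT_comp (@mfunV _ _ _ _ rho_meas (fun y => ltW (rho_pos y)))
           measurable_snd).
have m4 : measurable_fun [set: TX * TY] (fun w : TX * TY => lm w.1).
  exact: measurableT_comp.
have p1 (w : TX * TY) : (0 <= lp w.1)%R by rewrite /lp le_max lexx orbT.
have p4 (w : TX * TY) : (0 <= lm w.1)%R by rewrite /lm le_max lexx orbT.
have p2 (w : TX * TY) : (0 <= rho w.2 / mm w.1)%R by rewrite divr_ge0 // ltW.
have p3 (w : TX * TY) : (0 <= (rho w.2)^-1)%R by rewrite invr_ge0 // ltW.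
have : \int[P]_w ((F w * 2)%:E + (F w * lm w.1)%:E) <=
  \int[P]_w ((F w * lp w.1)%:E + (F w * (rho w.2 / mm w.1))%:E
            + (F w * (rho w.2)^-1)%:E).
  apply: ge0_le_integral => //.
  - by move=> w _; rewrite -EFinD lee_fin addr_ge0 // mulr_ge0.
  - apply/measurable_EFinP; apply: measurable_funD;
      by apply: measurable_funM.
  - apply/measurable_EFinP; apply: measurable_funD; [apply: measurable_funD|];
      by apply: measurable_funM.
have E1 (phi : TX * TY -> R) : measurable_fun [set: TX * TY] phi ->
    (forall w, 0 <= phi w)%R ->
    measurable_fun [set: TX * TY] (fun w => (F w * phi w)%:E) /\
    (forall w, [set: TX * TY] w -> 0 <= (F w * phi w)%:E).
  move=> mphi p0; split; first by apply/measurable_EFinP; apply: measurable_funM.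
  by move=> w _; rewrite lee_fin mulr_ge0.
have m0 : measurable_fun [set: TX * TY] (fun=> (2%R : R)) by exact: measurable_cst.
have [e1 f1] := E1 _ m0 (fun=> ler0n R 2%N).
have [e2 f2] := E1 _ m4 p4.
have [e3 f3] := E1 _ m1 p1.
have [e4 f4] := E1 _ m2 p2.
have [e5 f5] := E1 _ m3 p3.
rewrite ge0_integralD //.
rewrite ge0_integralD //; last 2 first.
- by move=> w _; apply: adde_ge0; [exact: f3|exact: f4].
- exact: emeasurable_funD.
rewrite ge0_integralD //.
have c2m : measurable_fun [set: TX] (fun=> 2%R : R) by exact: measurable_cst.
have lpx x : (0 <= lp x)%R by rewrite /lp le_max lexx orbT.
have lmx x : (0 <= lm x)%R by rewrite /lm le_max lexx orbT.
rewrite /F (intF (fun=> 2%R) c2m (fun=> ler0n R 2%N)) (intF lm lm_meas lmx)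
  (intF lp lp_meas lpx).
rewrite intT2 intT3.
have -> : \int[PX]_x (h x * 2)%:E = 2%:E.
  transitivity (\int[PX]_x (2%:E * (h x)%:E)).
    by apply: eq_integral => x _; rewrite -EFinM mulrC.
  rewrite ge0_integralZl //; last 2 first.
  - exact/measurable_EFinP.
  - by move=> x _; rewrite lee_fin ltW.
  by rewrite ih mule1.
have -> : \int[PX]_x (h x * lp x)%:E + 1 + 1 = 2%:E + \int[PX]_x (h x * lp x)%:E.
  by rewrite -addeA -EFinD addeC.
by rewrite leeD2lE.
Qed.

Lemma KLdec : KL PX h (hn n.+1) <= KL PX h (hn n).
Proof.
have lpx x : (0 <= lp x)%R by rewrite /lp le_max lexx orbT.
have lmx x : (0 <= lm x)%R by rewrite /lm le_max lexx orbT.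
have lnmmE x : ln (mm x) = (ln (c' x) - ln (c x))%R.
  by rewrite /mm lndiv // ccpos'.
have iB : PX.-integrable [set: TX]
    (fun x => (h x * `|ln (c' x)|)%:E + (h x * `|ln (c x)|)%:E).
  exact: (integrableD measurableT (hlnc_int n.+1) (hlnc_int n)).
have iB2 : PX.-integrable [set: TX]
    (fun x => (h x * `|ln (h x)|)%:E + (h x * `|ln (c' x)|)%:E).
  exact: (integrableD measurableT hlnh_int (hlnc_int n.+1)).
have Bge0 x : (0 <= h x * `|ln (c' x)| + h x * `|ln (c x)|)%R.
  by rewrite addr_ge0 // mulr_ge0 // ltW.
have ilp : PX.-integrable [set: TX] (fun x => (h x * lp x)%:E).
  apply: (le_integrable measurableT _ _ iB).
  - by apply/measurable_EFinP; apply: measurable_funM.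
  - move=> x _; rewrite -EFinD !abse_EFin lee_fin (ger0_norm (Bge0 x)).
    rewrite ger0_norm; last by rewrite mulr_ge0 // ltW.
    rewrite -mulrDr; apply: ler_wpM2l; first exact: ltW.
    rewrite /lp /lm; apply: le_trans (@max_le_norm R _) _; rewrite lnmmE.
    exact: ler_normB.
have ilm : PX.-integrable [set: TX] (fun x => (h x * lm x)%:E).
  apply: (le_integrable measurableT _ _ iB).
  - by apply/measurable_EFinP; apply: measurable_funM.
  - move=> x _; rewrite -EFinD !abse_EFin lee_fin (ger0_norm (Bge0 x)).
    rewrite ger0_norm; last by rewrite mulr_ge0 // ltW.
    rewrite -mulrDr; apply: ler_wpM2l; first exact: ltW.
    rewrite /lp /lm; apply: le_trans (@max_le_norm R _) _; rewrite lnmmE normrN.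
    exact: ler_normB.
have ia : PX.-integrable [set: TX] (fun x => (h x * ln (h x / c' x))%:E).
  apply: (le_integrable measurableT _ _ iB2).
  - apply/measurable_EFinP; apply: measurable_funM => //.
    apply: measurableT_comp; first exact: measurable_ln.
    by apply: measurable_funM => //; exact: ccinvmeas.
  - move=> x _; rewrite -EFinD !abse_EFin lee_fin.
    have B2 : (0 <= h x * `|ln (h x)| + h x * `|ln (c' x)|)%R.
      by rewrite addr_ge0 // mulr_ge0 // ltW.
    rewrite (ger0_norm B2).
    rewrite normrM (ger0_norm (ltW (h0 x))) -mulrDr; apply: ler_wpM2l.
      exact: ltW.
    by rewrite lndiv ?ccpos' // ler_normB.
rewrite !KLE.
rewrite [X in _ <= X](eq_integral (fun x => (h x * ln (h x / c' x))%:E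
   + ((h x * lp x)%:E - (h x * lm x)%:E))); last first.
  move=> x _; rewrite -EFinB -EFinD -mulrBr maxsub -mulrDr.
  congr (_%:E); congr (_ * _)%R.
  rewrite lnmmE !lndiv ?ccpos' //; lra.
rewrite integralD //; last by have := integrableB measurableT ilp ilm.
rewrite integralB_EFin //.
apply: leeDl; rewrite sube_ge0 ?keyint //.
by rewrite (integrable_fin_num measurableT ilm).
Qed.

End key.
End partii.
End main.
Theorem theorem3 (R : realType) (d1 d2 : measure_display)
  (TX : measurableType d1) (TY : measurableType d2)
  (P : probability (TX * TY)%type R)
  (kYX : R.-pker TX ~> TY) (kXY : R.-pker TY ~> TX)
  (h : TX -> R) (g0 : TY -> R) :
  is_rcd_YgivenX P kYX ->
  is_rcd_XgivenY P kXY ->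
  (* h > 0 is a density w.r.t. P_X of a probability measure *)
  measurable_fun [set: TX] h -> (forall x, 0 < h x) ->
  (\int[margX P]_x (h x)%:E = 1)%E ->
  (* g0 > 0 is a density w.r.t. P_Y of a probability measure *)
  measurable_fun [set: TY] g0 -> (forall y, 0 < g0 y) ->
  (\int[margY P]_y (g0 y)%:E = 1)%E ->
  (* the recursion is well defined (the integrals in it are finite) *)
  (forall n x, (\int[kYX x]_z (gseq kYX kXY h g0 n z)%:E < +oo)%E) ->
  (forall n y,
     (\int[kXY y]_x (qseq kYX kXY h g0 n x y * h x)%:E < +oo)%E) ->
  (* (i) *)
  ((forall n x, measurable_fun [set: TY] (qseq kYX kXY h g0 n x)
       /\ (forall y, 0 < qseq kYX kXY h g0 n x y)
       /\ (\int[kYX x]_y (qseq kYX kXY h g0 n x y)%:E = 1)%E) /\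
   (forall n, (1 <= n)%N ->
       measurable_fun [set: TY] (gseq kYX kXY h g0 n)
       /\ (forall y, 0 < gseq kYX kXY h g0 n y)
       /\ (\int[margY P]_y (gseq kYX kXY h g0 n y)%:E = 1)%E)) /\
  (* (ii) *)
  (forall hn : nat -> TX -> R,
     (* h_n = dQ^(n)_X / dP_X where dQ^(n)/dP = g_n(Y) *)
     (forall n, measurable_fun [set: TX] (hn n)) ->
     (forall n x, 0 <= hn n x) ->
     (forall n (A : set TX), measurable A ->
        (\int[margX P]_(x in A) (hn n x)%:E
         = \int[P]_(w in A `*` [set: TY]) (gseq kYX kXY h g0 n w.2)%:E)%E) ->
     (* finiteness of the integrals involved *)
     (\int[margX P]_x (h x * `|ln (h x)|)%:E < +oo)%E ->
     (forall n, (\int[margX P]_x (h x * `|ln (hn n x)|)%:E < +oo)%E) ->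
     (forall n, (\int[margY P]_y
        (gseq kYX kXY h g0 n.+1 y *
         `|ln (gseq kYX kXY h g0 n.+1 y / gseq kYX kXY h g0 n y)|)%:E
        < +oo)%E) ->
     forall n, (KL (margX P) h (hn n.+1) <= KL (margX P) h (hn n))%E).
Proof.
move=> rYX rXY mh h0 ih mg0 g00 ig0 finC finG.
have gm : forall n, measurable_fun [set: TY] (gseq kYX kXY h g0 n).
  by move=> n; apply: gmeas.
split; first split.
- move=> n x; split; first exact: qmeas (gm n) x.
  by split; [move=> y; apply: qpos'|apply: qint'].
- move=> n _; split; first exact: gm.
  by split; [move=> y; apply: gpos|apply: gint].
- move=> hn mhn hn0 hnE fhl fhn _ n.
  exact: (@KLdec R d1 d2 TX TY P kYX kXY h g0 rYX rXY mh h0 ih mg0 g00 ig0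
    finC finG hn mhn hn0 hnE fhl fhn n).
Qed.
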